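(* Let $N\ge 2$, $\mathcal N=\{1,\dots,N\}$, $\mathcal F=\{(i,j): i<j,\ i,j\in\mathcal N\}$, $B\in\mathbb Z_{\ge0}$, $S_1,\dots,S_N\in\mathbb Z_{\ge 0}$, and let $\mathcal X\subset\mathbb Z_{\ge0}^{\mathcal F}$ be the set of integer vectors $x$ with $\sum_{(i,j)\in\mathcal F}x_{ij}\le B$ and $\sum_{j<i}x_{ji}+\sum_{j>i}x_{ij}\le S_i$ for all $i$. Let $p_{\mathrm{e2e}}\in[0,1]$ and $\Delta t>0$, and define the throughput region $$\Lambda_{\mathrm{EGS}}=\frac{p_{\mathrm{e2e}}}{\Delta t}\,\mathrm{co}(\mathcal X)=\Big\{\tfrac{p_{\mathrm{e2e}}}{\Delta t}\textstyle\sum_{x\in\mathcal X}\delta_x x:\ \sum_{x\in\mathcal X}\delta_x=1,\ \delta_x\ge 0\Big\}.$$ Then $$R^{\mathrm{sec}}_{\mathrm{EGS}}\triangleq\max_{\lambda\in\Lambda_{\mathrm{EGS}}}\sum_{(i,j)\in\mathcal F}\lambda_{ij}=\frac{p_{\mathrm{e2e}}}{\Delta t}\,\min\Big\{B,\ \Big\lfloor\tfrac12\sum_i S_i\Big\rfloor,\ \sum_i S_i-S_{\max}\Big\},$$ where $S_{\max}=\max_i S_i$.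
   Context: This models an all-photonic entanglement generation switch with $N$ clients, $B$ Bell-state analyzers, per-client multiplexing degrees $S_i$, per-slot end-to-end success probability $p_{\mathrm{e2e}}$ of a BSA assigned to a pair, and slot duration $\Delta t$; $\mathrm{co}(\cdot)$ denotes convex hull. *)

(* Defs.v *)
From mathcomp Require Import all_boot all_order all_algebra.
From mathcomp Require Import reals.
Set Implicit Arguments. Unset Strict Implicit. Unset Printing Implicit Defensive.
Import Order.TTheory GRing.Theory Num.Theory.
Local Open Scope ring_scope.

(* Clients are 'I_N (0-based); the pair set F = {(i,j) | i < j}.
   A schedule x assigns a nat to every ordered pair; entries outside F are
   required to be 0, so that X is a (finite) subset of Z_{>=0}^F. *)

Definition total_use N (x : {ffun 'I_N * 'I_N -> nat}) : nat :=
  (\sum_(i < N) \sum_(j < N | (i < j)%N) x (i, j))%N.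

Definition load N (x : {ffun 'I_N * 'I_N -> nat}) (i : 'I_N) : nat :=
  ((\sum_(j < N | (j < i)%N) x (j, i)) + (\sum_(j < N | (i < j)%N) x (i, j)))%N.

Definition feasible N (B : nat) (S : 'I_N -> nat) (x : {ffun 'I_N * 'I_N -> nat}) : Prop :=
  (forall i j : 'I_N, ~~ (i < j)%N -> x (i, j) = 0%N) /\
  (total_use x <= B)%N /\
  (forall i, (load x i <= S i)%N).

Definition in_Lambda (R : realType) N (B : nat) (S : 'I_N -> nat) (p dt : R)
    (lam : 'I_N -> 'I_N -> R) : Prop :=
  exists (s : seq (R * {ffun 'I_N * 'I_N -> nat})),
    (forall d, d \in s -> 0 <= d.1 /\ feasible B S d.2) /\
    \sum_(d <- s) d.1 = 1 /\
    (forall i j, lam i j = p / dt * \sum_(d <- s) d.1 * ((d.2 (i, j))%:R)).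

Definition sum_F (R : realType) N (lam : 'I_N -> 'I_N -> R) : R :=
  \sum_(i < N) \sum_(j < N | (i < j)%N) lam i j.

(* Main.v *)
Require Import Defs.
From mathcomp Require Import all_boot all_order all_algebra.
From mathcomp Require Import reals.
From mathcomp Require Import zify.
Import Order.TTheory GRing.Theory Num.Theory.

Set Implicit Arguments. Unset Strict Implicit.
Section Helpers.

Lemma sum_eqb N (P : pred 'I_N) b :
  (\sum_(j < N | P j) (j == b) = P b)%N.
Proof.
rewrite big_mkcond (bigD1 b) //= eqxx big1 ?addn0; first by case: (P b).
by move=> j /negbTE ->; case: (P j).
Qed.

Definition addff N (x y : {ffun 'I_N * 'I_N -> nat}) : {ffun 'I_N * 'I_N -> nat} :=
  [ffun p => x p + y p]%N.

Lemma total_addff N (x y : {ffun 'I_N * 'I_N -> nat}) :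
  total_use (addff x y) = (total_use x + total_use y)%N.
Proof.
rewrite /total_use -big_split /=; apply: eq_bigr => i _.
rewrite -big_split /=; apply: eq_bigr => j _; by rewrite ffunE.
Qed.

Lemma load_addff N (x y : {ffun 'I_N * 'I_N -> nat}) i :
  load (addff x y) i = (load x i + load y i)%N.
Proof.
rewrite /load.
have -> : (\sum_(j < N | (j < i)%N) addff x y (j, i) = \sum_(j < N | (j < i)%N) x (j, i) + \sum_(j < N | (j < i)%N) y (j, i))%N.
  by rewrite -big_split; apply: eq_bigr => j _; rewrite ffunE.
have -> : (\sum_(j < N | (i < j)%N) addff x y (i, j) = \sum_(j < N | (i < j)%N) x (i, j) + \sum_(j < N | (i < j)%N) y (i, j))%N.
  by rewrite -big_split; apply: eq_bigr => j _; rewrite ffunE.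
lia.
Qed.

Definition unitff N (a b : 'I_N) : {ffun 'I_N * 'I_N -> nat} :=
  [ffun p => nat_of_bool ((p.1 == a) && (p.2 == b))].

Lemma total_unitf N (a b : 'I_N) : (a < b)%N -> total_use (unitff a b) = 1%N.
Proof.
move=> ab; rewrite /total_use.
transitivity (\sum_(i < N) ((i == a) * (i < b : nat)))%N.
  apply: eq_bigr => i _.
  transitivity (\sum_(j < N | (i < j)%N) ((i == a) * (j == b)))%N.
    by apply: eq_bigr => j _; rewrite ffunE /=; case: (i == a); case: (j == b).
  by rewrite -big_distrr /= sum_eqb.
rewrite (bigD1 a) //= eqxx ab big1 // => i /negbTE ->; by [].
Qed.

Lemma load_unitf N (a b : 'I_N) i : (a < b)%N ->
  load (unitff a b) i = ((i == a) + (i == b))%N.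
Proof.
move=> ab; rewrite /load.
have -> : (\sum_(j < N | (j < i)%N) unitff a b (j, i) = (i == b) * (a < i : nat))%N.
  transitivity (\sum_(j < N | (j < i)%N) ((i == b) * (j == a)))%N.
    by apply: eq_bigr => j _; rewrite ffunE /=; case: (i == b); case: (j == a).
  by rewrite -big_distrr /= sum_eqb.
have -> : (\sum_(j < N | (i < j)%N) unitff a b (i, j) = (i == a) * (i < b : nat))%N.
  transitivity (\sum_(j < N | (i < j)%N) ((i == a) * (j == b)))%N.
    by apply: eq_bigr => j _; rewrite ffunE /=; case: (i == a); case: (j == b).
  by rewrite -big_distrr /= sum_eqb.
have [ea|ia] := eqVneq i a.
  have [eb|ib] := eqVneq i b.
    by move: ab; rewrite -ea -eb ltnn.
  by rewrite ea ab.
have [eb|ib] := eqVneq i b; last by [].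
by rewrite eb ab.
Qed.

Lemma exist_x N (K : nat) : forall S : 'I_N -> nat, (1 < N)%N ->
  (2 * K <= \sum_(i < N) S i)%N -> (forall i, K + S i <= \sum_(i < N) S i)%N ->
  exists x : {ffun 'I_N * 'I_N -> nat},
    (forall i j : 'I_N, ~~ (i < j)%N -> x (i, j) = 0%N) /\
    total_use x = K /\ (forall i, load x i <= S i)%N.
Proof.
elim: K => [|K IH] S N2 H2 Hi.
  exists [ffun => 0%N]; split; first by move=> *; rewrite ffunE.
  split; rewrite /total_use /load.
    by rewrite big1 // => i _; rewrite big1 // => j _; rewrite ffunE.
  by move=> i; rewrite !big1 // => j _; rewrite ffunE.
set Ssum := (\sum_(i < N) S i)%N in H2 Hi.
have cN : (0 < #|'I_N|)%N by rewrite card_ord; lia.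
have [a Ha] := @bigop.eq_bigmax _ S cN.
have Hamax : forall i, (S i <= S a)%N by move=> i; rewrite -Ha bigop.leq_bigmax.
have [i0 i0a] : exists i0 : 'I_N, i0 != a.
  have N0 : (0 < N)%N by lia.
  case: (eqVneq a (Ordinal N0)) => [->|h]; last by exists (Ordinal N0); rewrite eq_sym.
  by exists (Ordinal N2); rewrite -val_eqE.
case: (@arg_maxnP _ i0 (fun i => i != a) S i0a) => b ba Hbmax.
have ab : (a == b) = false by rewrite eq_sym (negbTE ba).
have Hb : forall i, i != a -> (S i <= S b)%N by move=> i /Hbmax.
have sum2 : Ssum = (S a + S b + \sum_(i < N | (i != a) && (i != b)) S i)%N.
  by rewrite /Ssum (bigD1 a) //= (bigD1 b) //= addnA.
have sum3 : forall i, i != a -> i != b -> (S a + S b + S i <= Ssum)%N.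
  move=> i ia ib; rewrite sum2 leq_add2l (bigD1 i) /=; last by rewrite ia ib.
  exact: leq_addr.
have Sb1 : (1 <= S b)%N.
  rewrite lt0n; apply/negP => /eqP Sb0.
  have : Ssum = S a.
    rewrite /Ssum (bigD1 a) //= big1 ?addn0 // => i /Hb; rewrite Sb0; lia.
  move: (Hi a); lia.
have Sab : (S b <= S a)%N := Hamax b.
pose S' := fun i => (S i - (i == a) - (i == b))%N.
have HS' : forall i, S i = (S' i + (i == a) + (i == b))%N.
  move=> i; rewrite /S'; have [->|ia] := eqVneq i a.
    by rewrite ?eqxx ?ab /=; lia.
  have [->|ib] := eqVneq i b; by rewrite /=; lia.
have sumS' : Ssum = (\sum_(i < N) S' i + 2)%N.
  rewrite /Ssum (eq_bigr _ (fun i _ => HS' i)) !big_split /= !sum_eqb /=.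
  lia.
set T := (\sum_(i < N) S' i)%N in sumS'.
have [x [x0 [xt xl]]] : exists x : {ffun 'I_N * 'I_N -> nat},
    (forall i j : 'I_N, ~~ (i < j)%N -> x (i, j) = 0%N) /\
    total_use x = K /\ (forall i, load x i <= S' i)%N.
  apply: IH => //; rewrite -/T; first lia.
  move=> i; have := HS' i; have := Hi i.
  have [ea|ia] := eqVneq i a; first by rewrite ea ?eqxx ?ab /=; lia.
  have [eb|ib] := eqVneq i b; first by rewrite eb ?eqxx ?(negbTE ba) /=; lia.
  move: (sum3 i ia ib) (Hb i ia) (Hamax i) => /=; lia.
pose c := if (a < b)%N then a else b.
pose d := if (a < b)%N then b else a.
have cd : (c < d)%N.
  rewrite /c /d; case: ifP => // /negbT; rewrite -leqNgt => h.
  by rewrite ltn_neqAle h andbT; exact: ba.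
have Hcd : forall i, ((i == c) + (i == d) = (i == a) + (i == b))%N.
  by move=> i; rewrite /c /d; case: ifP => _ //; rewrite addnC.
exists (addff x (unitff c d)); split.
  move=> i j ij; rewrite ffunE x0 // ffunE /=.
  case: (eqVneq i c) => [ic|] //=; case: (eqVneq j d) => [jd|] //=.
  by move: ij; rewrite ic jd cd.
split; first by rewrite total_addff xt total_unitf // addn1.
move=> i; rewrite load_addff load_unitf // Hcd (HS' i).
by rewrite -addnA leq_add2r.
Qed.

Lemma sum_load N (x : {ffun 'I_N * 'I_N -> nat}) :
  (\sum_(i < N) load x i = 2 * total_use x)%N.
Proof.
rewrite /load big_split /= mul2n -addnn; congr (_ + _).
rewrite (exchange_big_dep xpredT) //=.
Qed.

Lemma load_le_total N (x : {ffun 'I_N * 'I_N -> nat}) i :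
  (load x i <= total_use x)%N.
Proof.
rewrite /load /total_use [X in (_ <= X)%N](bigD1 i) //= addnC leq_add2l.
rewrite big_mkcond (bigD1 i) //= ltnn add0n.
apply: leq_sum => k _; case: ifP => // ki.
by rewrite (bigD1 i) //= leq_addr.
Qed.

Lemma total_bound N (B : nat) (S : 'I_N -> nat) x : (0 < N)%N ->
  feasible B S x ->
  (total_use x <= minn B (minn (\sum_(i < N) S i)./2
      (\sum_(i < N) S i - \max_(i < N) S i)))%N.
Proof.
move=> N0 [_ [HB HS]].
have cN : (0 < #|'I_N|)%N by rewrite card_ord.
have [m ->] := @bigop.eq_bigmax _ S cN.
have H2 : (2 * total_use x <= \sum_(i < N) S i)%N.
  by rewrite -sum_load; apply: leq_sum => i _.
have Hm : (total_use x <= \sum_(i < N) S i - S m)%N.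
  have e1 := sum_load x; rewrite (bigD1 m) //= in e1.
  have e2 : (\sum_(i < N) S i = S m + \sum_(i < N | i != m) S i)%N by rewrite (bigD1 m).
  have e3 : (\sum_(i < N | i != m) load x i <= \sum_(i < N | i != m) S i)%N by apply: leq_sum.
  move: e1 e2 e3 (load_le_total x m).
  move: (\sum_(i < N | i != m) load x i)%N (\sum_(i < N | i != m) S i)%N (\sum_(i < N) S i)%N (load x m) (S m) => A C D L Sm.
  lia.
have := odd_double_half (\sum_(i < N) S i); rewrite -muln2.
have := leq_b1 (odd (\sum_(i < N) S i)).
lia.
Qed.
End Helpers.
Local Open Scope ring_scope.

Theorem theorem1 (R : realType) (N : nat) (B : nat) (S : 'I_N -> nat)
    (p dt : R) :
  (2 <= N)%N -> 0 <= p -> p <= 1 -> 0 < dt ->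
  let Ssum := (\sum_(i < N) S i)%N in
  let Smax := (\max_(i < N) S i)%N in
  let v := p / dt * (minn B (minn Ssum./2 (Ssum - Smax)))%:R in
  (exists lam, in_Lambda B S p dt lam /\ sum_F lam = v) /\
  (forall lam, in_Lambda B S p dt lam -> sum_F lam <= v).
Proof.
move=> N2 p0 p1 dt0 Ssum Smax v.
have pdt : 0 <= p / dt by rewrite divr_ge0 // ltW.
set M := minn B (minn Ssum./2 (Ssum - Smax)).
split.
  have H2 : (2 * M <= Ssum)%N.
    have := odd_double_half Ssum; rewrite -muln2; rewrite /M; lia.
  have Hi : forall i, (M + S i <= Ssum)%N.
    move=> i; have h1 : (S i <= Smax)%N by rewrite /Smax bigop.leq_bigmax.
    have h2 : (S i <= Ssum)%N by rewrite /Ssum (bigD1 i) //= leq_addr.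
    rewrite /M; lia.
  have [x [x0 [xt xl]]] := exist_x N2 H2 Hi.
  exists (fun i j => p / dt * (x (i, j))%:R); split.
    exists [:: (1, x)]; split.
      move=> d; rewrite inE => /eqP -> /=; split => //; split => //; split => //.
      by rewrite xt /M; lia.
    split; first by rewrite big_seq1.
    by move=> i j; rewrite big_seq1 /= mul1r.
  rewrite /sum_F /v -/M -xt /total_use natr_sum mulr_sumr; apply: eq_bigr => i _.
  by rewrite natr_sum mulr_sumr.
move=> lam [s [Hs [Hs1 Hlam]]].
have -> : sum_F lam = p / dt * \sum_(d <- s) d.1 * (total_use d.2)%:R.
  rewrite /sum_F /total_use.
  under eq_bigr => i _ do under eq_bigr => j _ do rewrite Hlam.
  under eq_bigr => i _ do rewrite -mulr_sumr.
  rewrite -mulr_sumr; congr (_ * _).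
  under eq_bigr => i _ do rewrite exchange_big /=.
  rewrite exchange_big /=; apply: eq_bigr => d _.
  rewrite natr_sum mulr_sumr; apply: eq_bigr => i _.
  by rewrite natr_sum mulr_sumr.
rewrite /v -/M ler_wpM2l //.
apply: (@le_trans _ _ (\sum_(d <- s) d.1 * M%:R)); last first.
  by rewrite -mulr_suml Hs1 mul1r.
rewrite !big_seq; apply: ler_sum => d ds; have [d1 fd] := Hs d ds.
rewrite ler_wpM2l // ler_nat.
have N0 : (0 < N)%N by lia.
exact: total_bound N0 fd.
Qed.
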